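(* Let $k\ge1$, $\alpha\in\mathrm{ASP}$ and $\beta\in\mathrm{EA}_k$ with $k>\mathrm{sci}(\alpha)+\mathrm{inv}_k(\beta)$. Then $\mathrm{sci}(\alpha\star\beta)\le\mathrm{sci}(\alpha)+\mathrm{inv}_k(\beta)$.
   Context: $\mathrm{ASP}$ denotes the group of almost-sign-preserving permutations: bijections $\alpha:\mathbb Z\to\mathbb Z$ such that $n$ and $\alpha(n)$ have the same sign for all but finitely many $n$ (here ''same sign'' means both positive or both nonpositive). $\mathrm{EA}_k$ is the group of bijections $\tau:\mathbb Z\to\mathbb Z$ with $\tau(n+k)=\tau(n)+k$ for all $n$ (these lie in $\mathrm{ASP}$). For $\alpha\in\mathrm{ASP}$ let $s_\alpha(a,b)=\#\{\ell\ge b:\ \alpha(\ell)<a\}$. The Demazure product $\star$ is the (unique, well-defined, associative) operation on $\mathrm{ASP}$ characterized by $s_{\alpha\star\beta}(a,b)=\min_{\ell\in\mathbb Z}\big(s_\alpha(a,\ell)+s_\beta(\ell,b)\big)$ for all $a,b\in\mathbb Z$. An inversion of a bijection $\tau$ is a pair $(a,b)$ with $a<b$, $\tau(a)>\tau(b)$; two inversions $(a,b),(a',b')$ are $k$-equivalent if $a-a'=b-b'\equiv0\pmod k$; $\mathrm{inv}_k(\tau)$ is the number of $k$-equivalence classes of inversions. A sign-changing inversion of $\alpha$ is a pair $(x,y)$ with $x<y$ and $\alpha(x)>0\ge\alpha(y)$; $\mathrm{sci}(\alpha)$ is the number of these. *)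

(* Defs.v *)
From Stdlib Require Import ZArith List ClassicalEpsilon.
Open Scope Z_scope.

Definition bij_Z (f : Z -> Z) : Prop :=
  exists g : Z -> Z, (forall x, g (f x) = x) /\ (forall y, f (g y) = y).

Definition same_sign (x y : Z) : Prop := (0 < x /\ 0 < y) \/ (x <= 0 /\ y <= 0).

Definition ASP (alpha : Z -> Z) : Prop :=
  bij_Z alpha /\
  exists l : list Z, forall n, ~ same_sign n (alpha n) -> In n l.

Definition EA (k : Z) (tau : Z -> Z) : Prop :=
  bij_Z tau /\ forall n, tau (n + k) = tau n + k.

(* Choose a natural number satisfying P (if any; 0 otherwise). Used only
   with predicates having a unique witness. *)
Definition choose_nat (P : nat -> Prop) : nat :=
  match excluded_middle_informative (exists c, P c) with
  | left H => proj1_sig (constructive_indefinite_description _ H)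
  | right _ => 0%nat
  end.

Definition is_card {T : Type} (P : T -> Prop) (c : nat) : Prop :=
  exists l : list T, NoDup l /\ (forall x, P x <-> In x l) /\ length l = c.

(* Cardinality of a finite set (0 by convention if infinite; never used so). *)
Definition card {T : Type} (P : T -> Prop) : nat := choose_nat (is_card P).

Definition s_fun (alpha : Z -> Z) (a b : Z) : nat :=
  card (fun l : Z => b <= l /\ alpha l < a).

(* The Demazure product gamma = alpha * beta, via its characterization. *)
Definition is_demazure (alpha beta gamma : Z -> Z) : Prop :=
  forall a b : Z,
    (exists l : Z, s_fun gamma a b = (s_fun alpha a l + s_fun beta l b)%nat) /\
    (forall l : Z, (s_fun gamma a b <= s_fun alpha a l + s_fun beta l b)%nat).

Definition inversion (tau : Z -> Z) (p : Z * Z) : Prop :=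
  fst p < snd p /\ tau (fst p) > tau (snd p).

Definition kequiv (k : Z) (p q : Z * Z) : Prop :=
  fst p - fst q = snd p - snd q /\ Z.divide k (fst p - fst q).

(* The inversions of tau fall into exactly c k-equivalence classes:
   a list of c pairwise inequivalent inversions meeting every class. *)
Definition is_num_inv_classes (k : Z) (tau : Z -> Z) (c : nat) : Prop :=
  exists l : list (Z * Z),
    NoDup l /\ length l = c /\
    (forall p, In p l -> inversion tau p) /\
    (forall p q, In p l -> In q l -> kequiv k p q -> p = q) /\
    (forall p, inversion tau p -> exists q, In q l /\ kequiv k p q).

Definition inv_k (k : Z) (tau : Z -> Z) : nat :=
  choose_nat (is_num_inv_classes k tau).

Definition sci (alpha : Z -> Z) : nat :=
  card (fun p : Z * Z => fst p < snd p /\ alpha (fst p) > 0 /\ alpha (snd p) <= 0).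

(* Main.v *)
Require Import Defs.
From Stdlib Require Import ZArith List Lia Classical ClassicalEpsilon PropExtensionality FunctionalExtensionality FinFun.
Open Scope Z_scope.
Import ListNotations.

Lemma is_card_unique {T} (P : T -> Prop) c1 c2 : is_card P c1 -> is_card P c2 -> c1 = c2.
Proof.
  intros [l1 [N1 [H1 L1]]] [l2 [N2 [H2 L2]]]. subst.
  apply Nat.le_antisymm; apply NoDup_incl_length; auto; intros x Hx.
  - apply H2, H1; auto.
  - apply H1, H2; auto.
Qed.

Lemma card_spec {T} (P : T -> Prop) c : is_card P c -> card P = c.
Proof.
  intros H. unfold card, choose_nat.
  destruct (excluded_middle_informative _) as [E|E].
  - destruct (constructive_indefinite_description _ E) as [c' Hc']. simpl.
    eapply is_card_unique; eauto.
  - exfalso. apply E. eauto.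
Qed.

Lemma choose_nat_spec (P : nat -> Prop) : (exists c, P c) -> P (choose_nat P).
Proof.
  intros H. unfold choose_nat.
  destruct (excluded_middle_informative _) as [E|E].
  - destruct (constructive_indefinite_description _ E) as [c' Hc']. simpl. auto.
  - contradiction.
Qed.

Lemma card_ext {T} (P Q : T -> Prop) : (forall x, P x <-> Q x) -> card P = card Q.
Proof.
  intros H. assert (P = Q) as E.
  { apply functional_extensionality; intro; apply propositional_extensionality; auto. }
  subst; auto.
Qed.

Lemma is_card_ext {T} (P Q : T -> Prop) c : (forall x, P x <-> Q x) -> is_card P c -> is_card Q c.
Proof.
  intros H [l [N [E L]]]. exists l. repeat split; auto; intros Hx.
  - apply E, H; auto.
  - apply H, E; auto.
Qed.

Lemma finite_is_card {T} (L : list T) : forall (P : T -> Prop), (forall x, P x -> In x L) -> exists c, is_card P c.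
Proof.
  induction L as [|a L IH]; intros P HP.
  - exists 0%nat. exists nil. split; [constructor|split; auto].
    intro x; split; [intro H; apply HP in H; destruct H| intros []].
  - destruct (IH (fun x => P x /\ x <> a)) as [c [l [N [E Len]]]].
    { intros x [Px Nx]. destruct (HP x Px); [congruence|auto]. }
    destruct (classic (P a)) as [Pa|Pa].
    + exists (S c). exists (a :: l). split; [|split].
      * constructor; auto. rewrite <- E. tauto.
      * intros x. simpl. rewrite <- E. split.
        -- intros Px. destruct (classic (a = x)); [left; auto | right; split; auto].
        -- intros [<-|[Px _]]; auto.
      * simpl; auto.
    + exists c, l. split; [auto|split; auto]. intro x. rewrite <- E. split.
      -- intros Px; split; auto. intro; subst; auto.
      -- tauto.
Qed.

Lemma is_card_add {T} (P : T -> Prop) c a : is_card P c -> ~ P a -> is_card (fun x => P x \/ x = a) (S c).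
Proof.
  intros [l [N [E L]]] Na. exists (a :: l). repeat split.
  - constructor; auto. rewrite <- E; auto.
  - intros [Px| ->]; simpl; [right; apply E; auto | left; auto].
  - simpl. intros [<-|H]; [right; auto | left; apply E; auto].
  - simpl; auto.
Qed.

Lemma is_card_bij {T} (P : T -> Prop) c (f g : T -> T) :
  (forall x, f (g x) = x) -> (forall x, g (f x) = x) -> is_card P c -> is_card (fun x => P (f x)) c.
Proof.
  intros fg gf [l [N [E L]]]. exists (map g l). repeat split.
  - apply Injective_map_NoDup; auto. intros x y Hxy. rewrite <- (fg x), <- (fg y), Hxy; auto.
  - intros Px. apply in_map_iff. exists (f x). split; auto. apply E; auto.
  - intros Hx. apply in_map_iff in Hx. destruct Hx as [y [<- Hy]]. rewrite fg. apply E; auto.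
  - rewrite length_map; auto.
Qed.

Lemma is_card_ge {T} (P : T -> Prop) c l : is_card P c -> NoDup l -> (forall x, In x l -> P x) -> (length l <= c)%nat.
Proof.
  intros [l' [N [E L]]] Nl H. subst. apply NoDup_incl_length; auto. intros x Hx. apply E, H; auto.
Qed.

Lemma is_card_empty {T} (P : T -> Prop) : (forall x, ~ P x) -> is_card P 0.
Proof. intros H. exists nil. split; [constructor|split; auto].
  intro x; split; [intro Hx; apply H in Hx; destruct Hx| intros []]. Qed.

Definition zrange (lo hi : Z) : list Z := map (fun i => lo + Z.of_nat i) (seq 0 (Z.to_nat (hi - lo))).

Lemma in_zrange lo hi z : In z (zrange lo hi) <-> lo <= z < hi.
Proof.
  unfold zrange. rewrite in_map_iff. split.
  - intros [i [<- Hi]]. apply in_seq in Hi. lia.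
  - intros H. exists (Z.to_nat (z - lo)). split; [lia|]. apply in_seq. lia.
Qed.

Lemma zrange_nodup lo hi : NoDup (zrange lo hi).
Proof.
  unfold zrange. apply Injective_map_NoDup; [|apply seq_NoDup]. intros a b H; lia.
Qed.

Lemma zrange_length lo hi : length (zrange lo hi) = Z.to_nat (hi - lo).
Proof. unfold zrange. rewrite length_map, length_seq. auto. Qed.

Lemma finite_box (P : Z -> Prop) lo hi : (forall x, P x -> lo <= x < hi) -> exists c, is_card P c.
Proof. intros H. apply (finite_is_card (zrange lo hi)). intros x Hx. apply in_zrange; auto. Qed.

Lemma finite_box2 (P : Z*Z -> Prop) lo hi : (forall p, P p -> lo <= fst p < hi /\ lo <= snd p < hi) -> exists c, is_card P c.
Proof.
  intros H. apply (finite_is_card (list_prod (zrange lo hi) (zrange lo hi))).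
  intros [a b] Hx. apply H in Hx. simpl in Hx. apply in_prod; apply in_zrange; lia.
Qed.

Definition ismin (f : Z -> nat) (v : nat) := (exists l, f l = v) /\ forall l, (v <= f l)%nat.

Lemma ismin_unique f v w : ismin f v -> ismin f w -> v = w.
Proof. intros [[l1 H1] A1] [[l2 H2] A2]. specialize (A1 l2). specialize (A2 l1). lia. Qed.

Definition fin_s (f : Z -> Z) := forall a b, exists c, is_card (fun l => b <= l /\ f l < a) c.

Lemma s_step_pos f a b : fin_s f ->
  s_fun f a b = (s_fun f a (b+1) + if Z.ltb (f b) a then 1 else 0)%nat.
Proof.
  intros F. destruct (F a (b+1)) as [c Hc]. unfold s_fun.
  rewrite (card_spec _ _ Hc).
  destruct (Z.ltb_spec (f b) a).
  - apply card_spec. rewrite Nat.add_1_r.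
    eapply is_card_ext; [|apply (is_card_add _ _ b Hc)].
    + intro l. simpl. split.
      * intros [[H1 H2]| ->]; split; auto; lia.
      * intros [H1 H2]. destruct (Z.eq_dec l b); [right; auto|left; split; auto; lia].
    + simpl. lia.
  - apply card_spec. rewrite Nat.add_0_r. eapply is_card_ext; [|apply Hc].
    intro l. simpl. split; intros [H1 H2]; split; auto; try lia.
    destruct (Z.eq_dec l b); subst; lia.
Qed.

Lemma s_step_val f g a b : fin_s f -> (forall x, f (g x) = x) -> (forall x, g (f x) = x) ->
  s_fun f (a+1) b = (s_fun f a b + if Z.leb b (g a) then 1 else 0)%nat.
Proof.
  intros F fg gf. destruct (F a b) as [c Hc]. unfold s_fun.
  rewrite (card_spec _ _ Hc).
  destruct (Z.leb_spec b (g a)).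
  - apply card_spec. rewrite Nat.add_1_r.
    eapply is_card_ext; [|apply (is_card_add _ _ (g a) Hc)].
    + intro l. simpl. split.
      * intros [[H1 H2]| ->]; split; auto; try lia. rewrite fg; lia.
      * intros [H1 H2]. destruct (Z.eq_dec (f l) a); [right; rewrite <- e, gf; auto|left; split; auto; lia].
    + simpl. rewrite fg. lia.
  - apply card_spec. rewrite Nat.add_0_r. eapply is_card_ext; [|apply Hc].
    intro l. simpl. split; intros [H1 H2]; split; auto; try lia.
    destruct (Z.eq_dec (f l) a); [|lia]. rewrite <- e, gf in H. lia.
Qed.

Lemma incr_aux (F : Z -> nat) : (forall m, F m <= F (m+1)%Z <= F m + 1)%nat ->
  forall n m, (F m <= F (m + Z.of_nat n)%Z <= F m + n)%nat.
Proof.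
  intros HF n. induction n; intros m.
  - rewrite Z.add_0_r. lia.
  - specialize (IHn m). specialize (HF (m + Z.of_nat n)%Z).
    replace (m + Z.of_nat (S n)) with (m + Z.of_nat n + 1) by lia. lia.
Qed.

Lemma incr_le (F : Z -> nat) : (forall m, F m <= F (m+1)%Z <= F m + 1)%nat ->
  forall l m, l <= m -> (F l <= F m)%nat /\ Z.of_nat (F m) <= Z.of_nat (F l) + (m - l).
Proof.
  intros HF l m H. pose proof (incr_aux F HF (Z.to_nat (m - l)) l) as A.
  replace (l + Z.of_nat (Z.to_nat (m - l))) with m in A by lia. lia.
Qed.

Lemma decr_aux (F : Z -> nat) : (forall m, F (m+1)%Z <= F m <= F (m+1)%Z + 1)%nat ->
  forall n m, (F (m + Z.of_nat n)%Z <= F m <= F (m + Z.of_nat n)%Z + n)%nat.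
Proof.
  intros HF n. induction n; intros m.
  - rewrite Z.add_0_r. lia.
  - specialize (IHn m). specialize (HF (m + Z.of_nat n)%Z).
    replace (m + Z.of_nat (S n)) with (m + Z.of_nat n + 1) by lia. lia.
Qed.

Lemma decr_le (F : Z -> nat) : (forall m, F (m+1)%Z <= F m <= F (m+1)%Z + 1)%nat ->
  forall l m, l <= m -> (F m <= F l)%nat /\ Z.of_nat (F l) <= Z.of_nat (F m) + (m - l).
Proof.
  intros HF l m H. pose proof (decr_aux F HF (Z.to_nat (m - l)) l) as A.
  replace (l + Z.of_nat (Z.to_nat (m - l))) with m in A by lia. lia.
Qed.

Lemma s_incr f g b : fin_s f -> (forall x, f (g x) = x) -> (forall x, g (f x) = x) ->
  forall m, (s_fun f m b <= s_fun f (m+1) b <= s_fun f m b + 1)%nat.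
Proof.
  intros F fg gf m. rewrite (s_step_val f g m b F fg gf). destruct (Z.leb b (g m)); lia.
Qed.

Definition stair (G : Z -> nat) :=
  (forall x, G x = G (x+1) \/ G x = S (G (x+1))) /\
  (exists B, forall x, B <= x -> G x = 0%nat) /\
  (exists A, forall x, x <= A -> G x = S (G (x+1))).

Definition Pinv (G : Z -> nat) (p : Z*Z) :=
  fst p < snd p /\ G (fst p) = G (fst p + 1) /\ G (snd p) <> G (snd p + 1).

Definition invG G := card (Pinv G).

Lemma stair_decr G : stair G -> forall m, (G (m+1)%Z <= G m <= G (m+1)%Z + 1)%nat.
Proof. intros [S _] m. destruct (S m); lia. Qed.

Lemma stair_fin G : stair G -> exists c, is_card (Pinv G) c.
Proof.
  intros [St [[B HB] [A HA]]]. apply (finite_box2 _ (Z.min A B) (Z.max A B + 1)).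
  intros [x y] [H1 [H2 H3]]. simpl in *.
  assert (A < x). { destruct (Z.le_gt_cases x A); auto. rewrite (HA x H) in H2. lia. }
  assert (y < B). { destruct (Z.le_gt_cases B y); auto. rewrite (HB y H0), (HB (y+1)) in H3 by lia. congruence. }
  lia.
Qed.
Open Scope bool_scope.

Definition site_b (k x : Z) (G : Z -> nat) (m : Z) : bool :=
  Z.eqb ((m - x - 1) mod k) 0 && Nat.eqb (G (m-1)%Z) (S (G m)) && Nat.eqb (G m) (G (m+1)%Z).
Definition Gstep k x G m : nat := (G m + if site_b k x G m then 1 else 0)%nat.
Definition Kk (k x l m : Z) : nat :=
  if Z.ltb l m then 0%nat else (Z.to_nat (l - m) + if Z.eqb l m && Z.eqb ((l - x - 1) mod k) 0 then 1 else 0)%nat.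

Lemma Gstep_min G k x m : stair G -> ismin (fun l => (G l + Kk k x l m)%nat) (Gstep k x G m).
Proof.
  intros SG. pose proof (stair_decr G SG) as D.
  assert (H1 : (G m <= G (m-1)%Z <= G m + 1)%nat).
  { specialize (D (m-1)). replace (m-1+1) with m in D by lia. lia. }
  assert (H2 := D m).
  assert (Lo : forall l, l < m -> (G (m-1)%Z <= G l)%nat).
  { intros l Hl. apply (decr_le G D l (m-1)); lia. }
  assert (Hi : forall l, m < l -> Z.of_nat (G (m+1)%Z) <= Z.of_nat (G l) + (l - (m+1))).
  { intros l Hl. apply (decr_le G D (m+1) l); lia. }
  unfold ismin, Gstep, site_b.
  assert (LB : forall l, (G m + (if Z.eqb ((m - x - 1) mod k) 0 && Nat.eqb (G (m-1)%Z) (S (G m)) && Nat.eqb (G m) (G (m+1)%Z) then 1 else 0) <= G l + Kk k x l m)%nat).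
  { intros l. unfold Kk. destruct (Z.ltb_spec l m).
    - specialize (Lo l H). destruct (Z.eqb _ 0); destruct (Nat.eqb_spec (G (m-1)%Z) (S (G m))); simpl; try lia.
      destruct (Nat.eqb _ _); simpl; lia.
    - destruct (Z.eqb_spec l m).
      + subst. rewrite Z.sub_diag. simpl. destruct (Z.eqb _ 0); simpl; try lia.
        destruct (Nat.eqb _ _); destruct (Nat.eqb _ _); simpl; lia.
      + assert (m < l) by lia. specialize (Hi l H0). simpl.
        destruct (Z.eqb _ 0); destruct (Nat.eqb_spec (G (m-1)%Z) (S (G m))); destruct (Nat.eqb_spec (G m) (G (m+1)%Z)); simpl; lia. }
  split; [|apply LB].
  destruct (Z.eqb_spec ((m - x - 1) mod k) 0) as [C|C];
  destruct (Nat.eqb_spec (G (m-1)%Z) (S (G m))) as [E1|E1];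
  destruct (Nat.eqb_spec (G m) (G (m+1)%Z)) as [E2|E2]; simpl.
  - exists m. unfold Kk. rewrite Z.ltb_irrefl, Z.eqb_refl, C, Z.sub_diag. simpl. lia.
  - exists (m+1). unfold Kk. rewrite (proj2 (Z.ltb_ge _ _)) by lia.
    rewrite (proj2 (Z.eqb_neq _ _)) by lia. simpl. replace (m+1-m) with 1 by lia. simpl. lia.
  - exists (m-1). unfold Kk. rewrite (proj2 (Z.ltb_lt _ _)) by lia. lia.
  - exists (m-1). unfold Kk. rewrite (proj2 (Z.ltb_lt _ _)) by lia. lia.
  - exists m. unfold Kk. rewrite Z.ltb_irrefl, Z.eqb_refl, Z.sub_diag. rewrite (proj2 (Z.eqb_neq _ _)) by auto. simpl. lia.
  - exists m. unfold Kk. rewrite Z.ltb_irrefl, Z.eqb_refl, Z.sub_diag. rewrite (proj2 (Z.eqb_neq _ _)) by auto. simpl. lia.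
  - exists m. unfold Kk. rewrite Z.ltb_irrefl, Z.eqb_refl, Z.sub_diag. rewrite (proj2 (Z.eqb_neq _ _)) by auto. simpl. lia.
  - exists m. unfold Kk. rewrite Z.ltb_irrefl, Z.eqb_refl, Z.sub_diag. rewrite (proj2 (Z.eqb_neq _ _)) by auto. simpl. lia.
Qed.

Lemma site_true k x G y : site_b k x G y = true ->
  G (y-1) = S (G y) /\ G y = G (y+1) /\ (y - x - 1) mod k = 0.
Proof.
  unfold site_b. intros H. apply andb_prop in H. destruct H as [H H3]. apply andb_prop in H. destruct H as [H1 H2].
  apply Z.eqb_eq in H1. apply Nat.eqb_eq in H2. apply Nat.eqb_eq in H3. auto.
Qed.

Lemma site_false k x G y : (y - x - 1) mod k = 0 -> G (y-1) = S (G y) -> G y = G (y+1) -> site_b k x G y = true.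
Proof.
  intros A B C. unfold site_b. rewrite A, B, C. rewrite Z.eqb_refl, !Nat.eqb_refl. auto.
Qed.

Lemma Gstep_stair G k x : stair G -> stair (Gstep k x G).
Proof.
  intros SG. destruct SG as [St [[B HB] [A HA]]]. unfold Gstep.
  split; [|split].
  - intros y. destruct (site_b k x G y) eqn:E1; destruct (site_b k x G (y+1)) eqn:E2.
    + apply site_true in E1. apply site_true in E2. replace (y+1-1) with y in E2 by lia. lia.
    + apply site_true in E1. lia.
    + apply site_true in E2. replace (y+1-1) with y in E2 by lia. lia.
    + rewrite !Nat.add_0_r. auto.
  - exists (B+1). intros y Hy. destruct (site_b k x G y) eqn:E1.
    + apply site_true in E1. rewrite (HB (y-1)) in E1 by lia. lia.
    + rewrite HB by lia. auto.
  - exists (A-1). intros y Hy. destruct (site_b k x G y) eqn:E1; destruct (site_b k x G (y+1)) eqn:E2.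
    + apply site_true in E1. rewrite (HA y) in E1 by lia. lia.
    + apply site_true in E1. rewrite (HA y) in E1 by lia. lia.
    + apply site_true in E2. rewrite (HA (y+1)) in E2 by lia. lia.
    + rewrite !Nat.add_0_r. apply HA. lia.
Qed.

Lemma cong_dist k x y1 y2 : 1 <= k -> (y1 - x - 1) mod k = 0 -> (y2 - x - 1) mod k = 0 -> y1 < y2 -> y1 + k <= y2.
Proof.
  intros Hk H1 H2 H. apply Z.mod_divide in H1; [|lia]. apply Z.mod_divide in H2; [|lia].
  assert (D : (k | y2 - y1)).
  { replace (y2 - y1) with ((y2 - x - 1) - (y1 - x - 1)) by lia. apply Z.divide_sub_r; auto. }
  apply Z.divide_pos_le in D; lia.
Qed.

Lemma two_sites k x G y1 y2 : 2 <= k -> stair G -> site_b k x G y1 = true -> site_b k x G y2 = true -> y1 < y2 ->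
  k - 1 <= Z.of_nat (invG G).
Proof.
  intros Hk SG S1 S2 Hy. apply site_true in S1. apply site_true in S2.
  pose proof (cong_dist k x y1 y2 ltac:(lia) (proj2 (proj2 S1)) (proj2 (proj2 S2)) Hy) as Dk.
  destruct (stair_fin G SG) as [c Hc]. unfold invG. rewrite (card_spec _ _ Hc).
  set (f := fun z => if Nat.eqb (G z) (G (z+1)) then (z, y2-1) else (y1, z)).
  set (L := (y1, y2-1) :: map f (zrange (y1+1) (y2-1))).
  assert (Len : length L = S (Z.to_nat (y2 - 1 - (y1 + 1)))).
  { unfold L. simpl. rewrite length_map, zrange_length. auto. }
  assert (LL : (length L <= c)%nat).
  { apply (is_card_ge (Pinv G)); auto.
    - unfold L. constructor.
      + rewrite in_map_iff. intros [z [Hz Hin]]. apply in_zrange in Hin. unfold f in Hz.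
        destruct (Nat.eqb _ _); inversion Hz; lia.
      + apply Injective_map_NoDup_in; [|apply zrange_nodup].
        intros a b Ha Hb Hab. apply in_zrange in Ha. apply in_zrange in Hb. unfold f in Hab.
        destruct (Nat.eqb _ _); destruct (Nat.eqb _ _); inversion Hab; lia.
    - unfold L. intros p Hp. destruct Hp as [<-|Hp].
      + unfold Pinv; simpl. replace (y2 - 1 + 1) with y2 by lia. lia.
      + apply in_map_iff in Hp. destruct Hp as [z [<- Hz]]. apply in_zrange in Hz. unfold f.
        destruct (Nat.eqb_spec (G z) (G (z+1))).
        * unfold Pinv; simpl. replace (y2 - 1 + 1) with y2 by lia. lia.
        * unfold Pinv; simpl. lia. }
  lia.
Qed.

Definition tau (y0 z : Z) : Z := if Z.eqb z (y0-1) then y0 else if Z.eqb z y0 then y0-1 else z.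

Lemma tau_inv y0 z : tau y0 (tau y0 z) = z.
Proof. unfold tau. destruct (Z.eqb_spec z (y0-1)).
  - rewrite Z.eqb_refl. destruct (Z.eqb_spec y0 (y0-1)); [lia|]. lia.
  - destruct (Z.eqb_spec z y0).
    + rewrite Z.eqb_refl. auto.
    + rewrite (proj2 (Z.eqb_neq _ _) n), (proj2 (Z.eqb_neq _ _) n0). auto. Qed.

Lemma Gstep_inv G k x : 2 <= k -> stair G -> Z.of_nat (invG G) + 2 <= k ->
  (invG (Gstep k x G) <= invG G + 1)%nat.
Proof.
  intros Hk SG Hinv.
  destruct (classic (exists y, site_b k x G y = true)) as [[y0 Hy0]|NS].
  - destruct (classic (exists y, y <> y0 /\ site_b k x G y = true)) as [[y [Hne Hy]]|NS2].
    + exfalso. assert (y < y0 \/ y0 < y) as [L|L] by lia.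
      * pose proof (two_sites k x G y y0 Hk SG Hy Hy0 L). lia.
      * pose proof (two_sites k x G y0 y Hk SG Hy0 Hy L). lia.
    + assert (Hs : forall z, Gstep k x G z = (G z + if Z.eqb z y0 then 1 else 0)%nat).
      { intros z. unfold Gstep. destruct (Z.eqb_spec z y0).
        - subst. rewrite Hy0. auto.
        - destruct (site_b k x G z) eqn:E; auto. exfalso. apply NS2. eauto. }
      pose proof (site_true _ _ _ _ Hy0) as [E1 [E2 _]].
      assert (W : forall z, (Gstep k x G z = Gstep k x G (z+1)) <-> (G (tau y0 z) = G (tau y0 z + 1))).
      { intros z. rewrite !Hs. unfold tau.
        destruct (Z.eqb_spec z (y0-1)).
        - rewrite e. replace (y0-1+1) with y0 by lia. rewrite Z.eqb_refl.
          destruct (Z.eqb_spec (y0-1) y0); [lia|]. lia.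
        - destruct (Z.eqb_spec z y0).
          + rewrite e. replace (y0-1+1) with y0 by lia. 
            destruct (Z.eqb_spec (y0+1) y0); [lia|]. lia.
          + destruct (Z.eqb_spec (z+1) y0); [lia|]. lia. }
      destruct (stair_fin G SG) as [c Hc]. unfold invG. rewrite (card_spec _ _ Hc).
      assert (Hc2 := is_card_bij (Pinv G) c (fun p => (tau y0 (fst p), tau y0 (snd p))) (fun p => (tau y0 (fst p), tau y0 (snd p)))
              ltac:(intros [a b]; simpl; rewrite !tau_inv; auto) ltac:(intros [a b]; simpl; rewrite !tau_inv; auto) Hc).
      assert (Hc3 := is_card_add _ _ (y0-1, y0) Hc2).
      rewrite (card_spec _ (S c)); [lia|].
      eapply is_card_ext; [|apply Hc3].
      * intros [a b]. unfold Pinv; simpl. split.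
        -- intros [[H1 [H2 H3]] | H].
           ++ assert (a < b).
              { revert H1 H2 H3. unfold tau.
                destruct (Z.eqb_spec a (y0-1)); destruct (Z.eqb_spec a y0); destruct (Z.eqb_spec b (y0-1)); destruct (Z.eqb_spec b y0); subst; try lia.
                all: intros; exfalso; replace (y0-1+1) with y0 in * by lia; lia. }
              split; auto. rewrite W, W. auto.
           ++ inversion H; subst. split; [lia|]. rewrite W, W. unfold tau.
              rewrite Z.eqb_refl. destruct (Z.eqb_spec y0 (y0-1)); [lia|]. rewrite Z.eqb_refl.
              replace (y0-1+1) with y0 by lia. lia.
        -- intros [H1 [H2 H3]]. rewrite W in H2. rewrite W in H3.
           destruct (classic ((a,b) = (y0-1,y0))) as [E|E]; [right; auto|left].
           split; auto. unfold tau in *.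
           destruct (Z.eqb_spec a (y0-1)); destruct (Z.eqb_spec a y0); destruct (Z.eqb_spec b (y0-1)); destruct (Z.eqb_spec b y0); subst; try lia.
           all: exfalso; apply E; reflexivity.
      * unfold Pinv, tau; simpl. rewrite Z.eqb_refl. destruct (Z.eqb_spec y0 (y0-1)); [lia|]. rewrite Z.eqb_refl. lia.
  - assert (Hs : forall z, Gstep k x G z = G z).
    { intros z. unfold Gstep. destruct (site_b k x G z) eqn:E; [exfalso; apply NS; eauto|lia]. }
    assert (Gstep k x G = G) as ->. { apply functional_extensionality; auto. }
    lia.
Qed.

Definition sw (k x v : Z) : Z :=
  if Z.eqb ((v - x) mod k) 0 then v+1 else if Z.eqb ((v - x - 1) mod k) 0 then v-1 else v.

Lemma cong_excl k a : 2 <= k -> a mod k = 0 -> (a - 1) mod k = 0 -> False.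
Proof.
  intros Hk H1 H2. apply Z.mod_divide in H1; [|lia]. apply Z.mod_divide in H2; [|lia].
  assert (D : (k | 1)). { replace 1 with (a - (a - 1)) by lia. apply Z.divide_sub_r; auto. }
  apply Z.divide_pos_le in D; lia.
Qed.

Lemma mod_jk k j : 1 <= k -> (j * k) mod k = 0.
Proof. intros. apply Z.mod_mul. lia. Qed.

Lemma mod_cong_ex k a : 1 <= k -> a mod k = 0 -> exists j, a = j * k.
Proof. intros Hk H. apply Z.mod_divide in H; [|lia]. destruct H as [j Hj]. eauto. Qed.

Lemma sw_inv k x v : 2 <= k -> sw k x (sw k x v) = v.
Proof.
  intros Hk. unfold sw.
  destruct (Z.eqb_spec ((v - x) mod k) 0) as [E1|E1].
  - replace (v + 1 - x) with (v - x + 1) by lia.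
    destruct (Z.eqb_spec ((v - x + 1) mod k) 0) as [E2|E2].
    + exfalso. apply (cong_excl k (v - x + 1)); auto. replace (v - x + 1 - 1) with (v - x) by lia. auto.
    + replace (v - x + 1 - 1) with (v - x) by lia. rewrite E1. simpl. lia.
  - destruct (Z.eqb_spec ((v - x - 1) mod k) 0) as [E2|E2].
    + replace (v - 1 - x) with (v - x - 1) by lia. rewrite E2. simpl. lia.
    + rewrite (proj2 (Z.eqb_neq _ _) E1), (proj2 (Z.eqb_neq _ _) E2). auto.
Qed.

Lemma sw_shift k x v : 2 <= k -> sw k x (v + k) = sw k x v + k.
Proof.
  intros Hk. unfold sw.
  replace (v + k - x) with (v - x + 1 * k) by lia. rewrite Z.mod_add by lia.
  replace (v - x + 1 * k - 1) with (v - x - 1 + 1 * k) by lia. rewrite Z.mod_add by lia.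
  destruct (Z.eqb _ 0); [lia|]. destruct (Z.eqb _ 0); lia.
Qed.

Lemma sw_val_x k x j : 2 <= k -> sw k x (x + j * k) = x + j * k + 1.
Proof. intros Hk. unfold sw. replace (x + j * k - x) with (j * k) by lia. rewrite mod_jk by lia. auto. Qed.

Lemma sw_val_x1 k x j : 2 <= k -> sw k x (x + 1 + j * k) = x + j * k.
Proof.
  intros Hk. unfold sw. replace (x + 1 + j * k - x - 1) with (j * k) by lia. rewrite mod_jk by lia.
  destruct (Z.eqb_spec ((x + 1 + j * k - x) mod k) 0) as [E|E]; [|simpl; lia].
  exfalso. apply (cong_excl k (x + 1 + j * k - x)); auto. replace (x + 1 + j * k - x - 1) with (j*k) by lia. apply mod_jk; lia.
Qed.

Lemma sw_lt_nc k x v l : 2 <= k -> (l - x - 1) mod k <> 0 -> (sw k x v < l <-> v < l).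
Proof.
  intros Hk Hl. unfold sw.
  destruct (Z.eqb_spec ((v - x) mod k) 0) as [E1|E1].
  - split; intros; [lia|]. destruct (Z.eq_dec v (l-1)); [|lia]. subst. exfalso. apply Hl.
    replace (l - x - 1) with (l - 1 - x) by lia. auto.
  - destruct (Z.eqb_spec ((v - x - 1) mod k) 0) as [E2|E2]; [|tauto].
    split; intros; [|lia]. destruct (Z.eq_dec v l); [|lia]. subst. tauto.
Qed.

Lemma sw_lt_c k x v l : 2 <= k -> (l - x - 1) mod k = 0 -> (sw k x v < l <-> v < l - 1 \/ v = l).
Proof.
  intros Hk Hl. unfold sw.
  destruct (Z.eqb_spec ((v - x) mod k) 0) as [E1|E1].
  - split; intros H.
    + destruct (Z.eq_dec v (l-1)); [|lia]. subst. lia.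
    + destruct H; [lia|]. subst. exfalso. apply (cong_excl k (l - x)); auto.

  - destruct (Z.eqb_spec ((v - x - 1) mod k) 0) as [E2|E2].
    + split; intros H.
      * destruct (Z.eq_dec v l); [right; auto|]. left. destruct (Z.eq_dec v (l-1)); [|lia].
        subst. exfalso. apply (cong_excl k (l - 1 - x)); auto. replace (l - 1 - x - 1) with (l - x - 1 - 1) by lia.
        exfalso. apply E1. replace (l - 1 - x) with (l - x - 1) by lia. auto.
      * lia.
    + split; intros H.
      * destruct (Z.eq_dec v (l-1)); [|lia]. subst. exfalso. apply E1. replace (l - 1 - x) with (l - x - 1) by lia. auto.
      * destruct H; [lia|]. subst. tauto.
Qed.

Lemma sw_order k x u v : 2 <= k -> v < u -> ~ ((v - x) mod k = 0 /\ u = v + 1) -> sw k x v < sw k x u.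
Proof.
  intros Hk H N. unfold sw.
  destruct (Z.eqb_spec ((v - x) mod k) 0) as [E1|E1];
  destruct (Z.eqb_spec ((v - x - 1) mod k) 0) as [E2|E2];
  destruct (Z.eqb_spec ((u - x) mod k) 0) as [E3|E3];
  destruct (Z.eqb_spec ((u - x - 1) mod k) 0) as [E4|E4]; try lia.
  all: try (exfalso; apply (cong_excl k (v - x)); auto; fail).
  all: try (exfalso; apply (cong_excl k (u - x)); auto; fail).
  all: try (assert (u <> v + 1) by (intro; subst; tauto)).
  all: try (destruct (Z.eq_dec u (v+2)); [subst; first [lia | exfalso; apply (cong_excl k (v - x + 1)); [auto| replace (v - x + 1) with (v + 2 - x - 1) by lia; auto | replace (v - x + 1 - 1) with (v - x) by lia; auto]]|]).
  all: try lia.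
  all: try (subst; replace (v + 1 - x - 1) with (v - x) in * by lia; tauto).
  all: destruct (Z.eq_dec u (v+1)); [subst; replace (v+1-x-1) with (v-x) in * by lia; tauto | lia].
Qed.

Lemma EA_mult (k : Z) (f : Z -> Z) : (forall n, f (n + k) = f n + k) -> forall n j, f (n + j * k) = f n + j * k.
Proof.
  intros H.
  assert (P : forall m : nat, forall n, f (n + Z.of_nat m * k) = f n + Z.of_nat m * k).
  { induction m; intros n; [simpl; rewrite !Z.add_0_r; auto|].
    replace (n + Z.of_nat (S m) * k) with (n + Z.of_nat m * k + k) by lia. rewrite H, IHm. lia. }
  assert (Nn : forall m : nat, forall n, f (n - Z.of_nat m * k) = f n - Z.of_nat m * k).
  { intros m n. specialize (P m (n - Z.of_nat m * k)). replace (n - Z.of_nat m * k + Z.of_nat m * k) with n in P by lia. lia. }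
  intros n j. destruct (Z.le_gt_cases 0 j).
  - replace j with (Z.of_nat (Z.to_nat j)) by lia. apply P.
  - specialize (Nn (Z.to_nat (- j)) n). replace (Z.of_nat (Z.to_nat (-j))) with (- j) in Nn by lia.
    replace (n + j * k) with (n - - j * k) by lia. rewrite Nn. lia.
Qed.

Lemma inv_shift k f g : (forall x, f (g x) = x) -> (forall x, g (f x) = x) -> (forall n, f (n + k) = f n + k) ->
  forall n, g (n + k) = g n + k.
Proof. intros fg gf H n. rewrite <- (fg n) at 1. rewrite <- H. apply gf. Qed.

Lemma kequiv_sym k p q : kequiv k p q -> kequiv k q p.
Proof. unfold kequiv. intros [H1 H2]. split; [lia|]. replace (fst q - fst p) with (-(fst p - fst q)) by lia. apply Z.divide_opp_r; auto. Qed.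

Lemma kequiv_trans k p q r : kequiv k p q -> kequiv k q r -> kequiv k p r.
Proof. unfold kequiv. intros [H1 H2] [H3 H4]. split; [lia|].
  replace (fst p - fst r) with ((fst p - fst q) + (fst q - fst r)) by lia. apply Z.divide_add_r; auto. Qed.

Lemma kequiv_ex k p a b : kequiv k p (a, b) -> exists j, p = (a + j * k, b + j * k).
Proof. unfold kequiv. destruct p as [p1 p2]. simpl. intros [H1 [j Hj]]. exists j. f_equal; lia. Qed.

Lemma kequiv_mk k a b j : kequiv k (a + j * k, b + j * k) (a, b).
Proof. unfold kequiv. simpl. split; [lia|]. exists j. lia. Qed.

Lemma desc_exists (g : Z -> Z) : forall n v u, u = v + Z.of_nat n -> g u < g v -> exists x, g (x+1) < g x.
Proof.
  induction n; intros v u Hu H.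
  - simpl in Hu. subst. rewrite Z.add_0_r in H. lia.
  - destruct (Z.lt_ge_cases (g (v+1)) (g v)); [eauto|].
    apply (IHn (v+1) u); lia.
Qed.

Section Peel.
Variables (k : Z) (beta g : Z -> Z).
Hypothesis Hk : 2 <= k.
Hypothesis bg : forall x, beta (g x) = x.
Hypothesis gb : forall x, g (beta x) = x.
Hypothesis Hsh : forall n, beta (n + k) = beta n + k.

Lemma g_mult : forall n j, g (n + j * k) = g n + j * k.
Proof. apply EA_mult. apply (inv_shift k beta g); auto. Qed.

Lemma beta_mult : forall n j, beta (n + j * k) = beta n + j * k.
Proof. apply EA_mult. auto. Qed.

Lemma inv_beta2 x : g (x+1) < g x -> forall p,
  inversion (fun n => sw k x (beta n)) p <-> inversion beta p /\ ~ kequiv k p (g (x+1), g x).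
Proof.
  intros Hd [p1 p2]. unfold inversion. simpl. split.
  - intros [H1 H2]. assert (Ord : beta p2 < beta p1).
    { destruct (classic ((sw k x (beta p2) - x) mod k = 0 /\ sw k x (beta p1) = sw k x (beta p2) + 1)) as [[C1 C2]|C].
      - exfalso. destruct (mod_cong_ex k _ ltac:(lia) C1) as [j Hj].
        assert (E2 : sw k x (beta p2) = x + j * k) by lia.
        rewrite E2 in C2.
        assert (beta p2 = x + 1 + j * k). { rewrite <- (sw_inv k x (beta p2)) by lia. rewrite E2. rewrite sw_val_x by lia. lia. }
        assert (beta p1 = x + j * k). { rewrite <- (sw_inv k x (beta p1)) by lia. rewrite C2. replace (x + j*k+1) with (x+1+j*k) by lia. rewrite sw_val_x1 by lia. lia. }
        assert (p2 = g (x+1) + j * k). { rewrite <- (gb p2), H, g_mult. auto. }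
        assert (p1 = g x + j * k). { rewrite <- (gb p1), H0, g_mult. auto. }
        lia.
      - pose proof (sw_order k x (sw k x (beta p1)) (sw k x (beta p2)) Hk ltac:(lia) C). rewrite !sw_inv in H by lia. lia. }
    split; [split; auto; lia|].
    intros E. destruct (kequiv_ex _ _ _ _ E) as [j Hj]. inversion Hj; subst.
    rewrite !beta_mult, !bg in H2. replace (x + 1 + j * k) with (x + 1 + j * k) in H2 by lia.
    rewrite sw_val_x1, sw_val_x in H2 by lia. lia.
  - intros [[H1 H2] N]. split; auto.
    apply Z.lt_gt. apply sw_order; auto; [lia|]. intros [C1 C2]. apply N.
    destruct (mod_cong_ex k _ ltac:(lia) C1) as [j Hj].
    assert (p2 = g x + j * k). { rewrite <- (gb p2). replace (beta p2) with (x + j * k) by lia. apply g_mult. }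
    assert (p1 = g (x+1) + j * k). { rewrite <- (gb p1). replace (beta p1) with ((x+1) + j * k) by lia. apply g_mult. }
    subst. apply kequiv_mk.
Qed.

Lemma peel t : is_num_inv_classes k beta (S t) ->
  exists x, g (x+1) < g x /\ is_num_inv_classes k (fun n => sw k x (beta n)) t.
Proof.
  intros [L [N [Len [Inv [Pw Cov]]]]].
  destruct L as [|p0 L0]; [simpl in Len; lia|].
  destruct (Inv p0 (or_introl eq_refl)) as [Hlt Hgt].
  destruct (desc_exists g (Z.to_nat (beta (fst p0) - beta (snd p0))) (beta (snd p0)) (beta (fst p0)) ltac:(lia)
    ltac:(rewrite !gb; lia)) as [x Hx].
  exists x. split; auto.
  set (L := p0 :: L0) in *.
  assert (I0 : inversion beta (g (x+1), g x)). { unfold inversion; simpl. rewrite !bg. lia. }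
  destruct (Cov _ I0) as [q [Hq Eq]].
  destruct (in_split _ _ Hq) as [L1 [L2 HL]].
  exists (L1 ++ L2). rewrite HL in N, Len.
  assert (Nq : ~ In q (L1 ++ L2)) by (eapply NoDup_remove_2; eauto).
  split; [eapply NoDup_remove_1; eauto|].
  split; [rewrite length_app in *; simpl in Len; lia|].
  assert (Sub : forall p, In p (L1 ++ L2) -> In p L).
  { intros p Hp. rewrite HL. apply in_app_or in Hp. apply in_or_app. simpl. tauto. }
  split; [|split].
  - intros p Hp. apply inv_beta2; auto. split; [apply Inv, Sub; auto|].
    intros E. assert (p = q). { apply Pw; auto. eapply kequiv_trans; eauto. }
    subst; auto.
  - intros p q' Hp Hq'. apply Pw; auto.
  - intros p Hp. apply inv_beta2 in Hp; auto. destruct Hp as [Ip Np].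
    destruct (Cov p Ip) as [q' [Hq' E']].
    rewrite HL in Hq'. apply in_app_or in Hq'. destruct Hq' as [H|[H|H]].
    + exists q'. split; auto. apply in_or_app; auto.
    + subst. exfalso. apply Np. eapply kequiv_trans; [eauto|]. apply kequiv_sym; auto.
    + exists q'. split; auto. apply in_or_app; auto.
Qed.

End Peel.

Lemma bound_range (h : Z -> Z) lo : forall n : nat, exists M, forall r, lo <= r < lo + Z.of_nat n -> h r <= M.
Proof.
  induction n.
  - exists 0. intros; lia.
  - destruct IHn as [M HM]. exists (Z.max M (h (lo + Z.of_nat n))). intros r Hr.
    destruct (Z.eq_dec r (lo + Z.of_nat n)); [subst; lia|]. specialize (HM r ltac:(lia)). lia.
Qed.

Lemma EA_fin k f : 1 <= k -> (forall n, f (n + k) = f n + k) -> fin_s f.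
Proof.
  intros Hk H a b.
  destruct (bound_range (fun r => r - f r) 0 (Z.to_nat k)) as [M HM].
  apply (finite_box _ b (a + M + 1)). intros l [H1 H2]. split; auto.
  pose proof (EA_mult k f H (l mod k) (l / k)) as E.
  rewrite Z.add_comm, Z.mul_comm, <- Z.div_mod in E by lia.
  specialize (HM (l mod k)). simpl in HM.
  assert (0 <= l mod k < k) by (apply Z.mod_pos_bound; lia).
  specialize (HM ltac:(lia)).
  assert (l = k * (l / k) + l mod k) by (apply Z.div_mod; lia). set (q := k * (l / k)) in *. lia.
Qed.

Definition ismin_assoc (G : Z -> nat) (K : Z -> Z -> nat) (S2 C D : Z -> nat) h :
  (forall l, ismin (fun m => (K l m + S2 m)%nat) (C l)) ->
  (forall m, ismin (fun l => (G l + K l m)%nat) (D m)) ->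
  ismin (fun l => (G l + C l)%nat) h -> ismin (fun m => (D m + S2 m)%nat) h.
Proof.
  intros HC HD [[l0 E0] A0].
  destruct (HC l0) as [[m0 Em] _].
  destruct (HD m0) as [_ Dlow].
  split.
  - exists m0. apply Nat.le_antisymm.
    + specialize (Dlow l0). lia.
    + destruct (HD m0) as [[l1 El] _]. destruct (HC l1) as [_ Cl]. specialize (Cl m0). specialize (A0 l1). lia.
  - intros m. destruct (HD m) as [[l1 El] _]. destruct (HC l1) as [_ Cl]. specialize (Cl m). specialize (A0 l1). lia.
Qed.

Section Kernel.
Variables (k x : Z) (b2 g2 : Z -> Z).
Hypothesis Hk : 2 <= k.
Hypothesis F2 : fin_s b2.
Hypothesis bg : forall y, b2 (g2 y) = y.
Hypothesis gb : forall y, g2 (b2 y) = y.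
Hypothesis Asc : forall l, (l - x - 1) mod k = 0 -> g2 (l - 1) < g2 l.

Lemma s_sw_c l b : (l - x - 1) mod k = 0 ->
  s_fun (fun n => sw k x (b2 n)) l b = (s_fun b2 (l-1) b + if Z.leb b (g2 l) then 1 else 0)%nat.
Proof.
  intros C. destruct (F2 (l-1) b) as [c Hc]. unfold s_fun. rewrite (card_spec _ _ Hc).
  apply card_spec. destruct (Z.leb_spec b (g2 l)).
  - rewrite Nat.add_1_r. eapply is_card_ext; [|apply (is_card_add _ _ (g2 l) Hc)].
    + intros z. simpl. rewrite sw_lt_c by auto. split.
      * intros [[H1 H2]| ->]; split; auto; lia || (rewrite bg; lia).
      * intros [H1 [H2| H2]]; [left; auto| right; rewrite <- H2, gb; auto].
    + simpl. rewrite bg. lia.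
  - rewrite Nat.add_0_r. eapply is_card_ext; [|apply Hc].
    intros z. simpl. rewrite sw_lt_c by auto. split.
    + intros [H1 H2]; split; auto.
    + intros [H1 [H2|H2]]; split; auto. exfalso. rewrite <- H2, gb in H. lia.
Qed.

Lemma s_sw_nc l b : (l - x - 1) mod k <> 0 ->
  s_fun (fun n => sw k x (b2 n)) l b = s_fun b2 l b.
Proof.
  intros C. unfold s_fun. apply card_ext. intros z. rewrite sw_lt_nc by auto. tauto.
Qed.

Lemma kernel l b : ismin (fun m => (Kk k x l m + s_fun b2 m b)%nat) (s_fun (fun n => sw k x (b2 n)) l b).
Proof.
  set (s := fun m => s_fun b2 m b).
  assert (Sv : forall m, s (m+1) = (s m + if Z.leb b (g2 m) then 1 else 0)%nat).
  { intros m. unfold s. apply s_step_val; auto. }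
  assert (Inc : forall m, (s m <= s (m+1)%Z <= s m + 1)%nat).
  { intros m. rewrite Sv. destruct (Z.leb _ _); lia. }
  assert (Up : forall m, l < m -> (s (l+1)%Z <= s m)%nat).
  { intros m Hm. apply (incr_le s Inc); lia. }
  assert (Dn : forall m, m < l -> Z.of_nat (s (l-1)) <= Z.of_nat (s m) + (l - 1 - m)).
  { intros m Hm. apply (incr_le s Inc); lia. }
  assert (Sl : s l = (s (l-1)%Z + if Z.leb b (g2 (l-1)) then 1 else 0)%nat).
  { rewrite <- Sv. f_equal. lia. }
  subst s. cbv beta in *.
  destruct (Z.eq_dec ((l - x - 1) mod k) 0) as [C|C].
  - rewrite s_sw_c by auto.
    pose proof (Asc l C) as A. pose proof (Sv l) as Sl1.
    split.
    + destruct (Z.leb_spec b (g2 l)).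
      * exists (l-1). unfold Kk. rewrite (proj2 (Z.ltb_ge _ _)) by lia. rewrite (proj2 (Z.eqb_neq l (l-1))) by lia.
        replace (l - (l-1)) with 1 by lia. simpl. lia.
      * exists (l+1). unfold Kk. rewrite (proj2 (Z.ltb_lt _ _)) by lia.
        rewrite Sl1, Sl. destruct (Z.leb_spec b (g2 l)); [lia|]. destruct (Z.leb_spec b (g2 (l-1))); [lia|]. lia.
    + intros m. unfold Kk. destruct (Z.ltb_spec l m).
      * specialize (Up m H). rewrite Sl1, Sl in Up. destruct (Z.leb _ _); destruct (Z.leb _ _); simpl; lia.
      * destruct (Z.eqb_spec l m).
        -- subst. rewrite C, Z.sub_diag. simpl. rewrite Sl. destruct (Z.leb _ (g2 m)); destruct (Z.leb _ (g2 (m-1))); lia.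
        -- specialize (Dn m ltac:(lia)). simpl. destruct (Z.leb b (g2 l)); lia.
  - rewrite s_sw_nc by auto. split.
    + exists l. unfold Kk. rewrite Z.ltb_irrefl, Z.eqb_refl, Z.sub_diag. rewrite (proj2 (Z.eqb_neq _ _) C). simpl. lia.
    + intros m. unfold Kk. destruct (Z.ltb_spec l m).
      * specialize (Up m H). rewrite Sv in Up. destruct (Z.leb _ _); lia.
      * destruct (Z.eqb_spec l m).
        -- subst. lia.
        -- specialize (Dn m ltac:(lia)). rewrite Sl. simpl. destruct (Z.leb _ _); lia.
Qed.

End Kernel.

Lemma no_inv_shift (beta g : Z -> Z) : (forall x, beta (g x) = x) -> (forall x, g (beta x) = x) ->
  (forall a b, a < b -> beta a <= beta b) -> forall n, beta n = n + beta 0.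
Proof.
  intros bg gb M.
  assert (St : forall n, beta (n + 1) = beta n + 1).
  { intros n. assert (beta n < beta (n+1)).
    { pose proof (M n (n+1) ltac:(lia)). destruct (Z.eq_dec (beta n) (beta (n+1))); [|lia].
      apply (f_equal g) in e. rewrite !gb in e. lia. }
    destruct (Z.eq_dec (beta (n+1)) (beta n + 1)); auto. exfalso.
    set (m := g (beta n + 1)). assert (Em : beta m = beta n + 1) by apply bg.
    destruct (Z.lt_ge_cases m (n+1)).
    - destruct (Z.eq_dec m n). { subst m. rewrite e in Em. lia. }
      pose proof (M m n ltac:(lia)). lia.
    - destruct (Z.eq_dec m (n+1)). { rewrite e in Em. lia. }
      pose proof (M (n+1) m ltac:(lia)). lia. }
  intros n. pose proof (EA_mult 1 beta St 0 n). rewrite Z.mul_1_r, Z.add_0_l in H. lia.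
Qed.

Lemma invG_shift G c : stair G -> invG (fun b => G (b + c)) = invG G.
Proof.
  intros SG. destruct (stair_fin G SG) as [c0 Hc]. unfold invG. rewrite (card_spec _ _ Hc).
  apply card_spec.
  pose proof (is_card_bij (Pinv G) c0 (fun p => (fst p + c, snd p + c)) (fun p => (fst p - c, snd p - c))
    ltac:(intros [a b]; simpl; f_equal; lia) ltac:(intros [a b]; simpl; f_equal; lia) Hc) as H.
  eapply is_card_ext; [|apply H]. intros [a b]. unfold Pinv. simpl.
  replace (a + 1 + c) with (a + c + 1) by lia. replace (b + 1 + c) with (b + c + 1) by lia. lia.
Qed.

Lemma main_ind k : 1 <= k -> forall t beta g G s H,
  (forall x, beta (g x) = x) -> (forall x, g (beta x) = x) -> (forall n, beta (n + k) = beta n + k) ->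
  is_num_inv_classes k beta t -> stair G -> (invG G <= s)%nat -> Z.of_nat (s + t) < k ->
  (forall b, ismin (fun l => (G l + s_fun beta l b)%nat) (H b)) -> (invG H <= s + t)%nat.
Proof.
  intros Hk t. induction t as [|t IH]; intros beta g G s H bg gb Sh Cl SG IG Kb Hm.
  -
    destruct Cl as [L [_ [Len [_ [_ Cov]]]]]. destruct L; [|simpl in Len; lia].
    assert (Sf : forall n, beta n = n + beta 0).
    { apply (no_inv_shift beta g); auto. intros a b Hab. destruct (Z.le_gt_cases (beta a) (beta b)); auto.
      destruct (Cov (a, b) ltac:(unfold inversion; simpl; lia)) as [q [[] _]]. }
    set (c := beta 0) in *.
    pose proof (EA_fin k beta Hk Sh) as F.
    pose proof (stair_decr G SG) as D.
    assert (HE : forall b, H b = G (b + c)).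
    { intros b. apply (ismin_unique _ _ _ (Hm b)). split.
      - exists (b + c). replace (s_fun beta (b + c) b) with 0%nat; [lia|].
        symmetry. unfold s_fun. apply card_spec. apply is_card_empty. intros z [H1 H2]. rewrite Sf in H2. lia.
      - intros l. destruct (Z.le_gt_cases l (b + c)).
        + pose proof (decr_le G D l (b + c) H0). lia.
        + pose proof (decr_le G D (b + c) l ltac:(lia)).
          destruct (F l b) as [c1 Hc1].
          assert (Lc : (length (zrange b (l - c)) <= c1)%nat).
          { apply (is_card_ge _ _ _ Hc1); [apply zrange_nodup|]. intros z Hz. apply in_zrange in Hz. rewrite Sf. lia. }
          rewrite zrange_length in Lc. unfold s_fun. rewrite (card_spec _ _ Hc1). lia. }
    assert (H = fun b => G (b + c)) as -> by (apply functional_extensionality; auto).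
    rewrite invG_shift; auto. lia.
  - assert (Hk2 : 2 <= k) by lia.
    destruct (peel k beta g Hk2 bg gb Sh t Cl) as [x [Hx Cl2]].
    set (b2 := fun n => sw k x (beta n)) in *.
    set (g2 := fun n => g (sw k x n)).
    assert (bg2 : forall y, b2 (g2 y) = y). { intros y. unfold b2, g2. rewrite bg. apply sw_inv; auto. }
    assert (gb2 : forall y, g2 (b2 y) = y). { intros y. unfold b2, g2. rewrite sw_inv, gb; auto. }
    assert (Sh2 : forall n, b2 (n + k) = b2 n + k). { intros n. unfold b2. rewrite Sh. apply sw_shift; auto. }
    assert (Asc : forall l, (l - x - 1) mod k = 0 -> g2 (l - 1) < g2 l).
    { intros l C. unfold g2. destruct (mod_cong_ex k _ ltac:(lia) C) as [j Hj].
      replace (l - 1) with (x + j * k) by lia. rewrite sw_val_x by auto.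
      replace l with (x + 1 + j * k) by lia. rewrite sw_val_x1 by auto.
      replace (x + j * k + 1) with ((x + 1) + j * k) by lia. rewrite !(g_mult k beta g) by auto. lia. }
    assert (Bet : forall n, beta n = sw k x (b2 n)). { intros n. unfold b2. rewrite sw_inv; auto. }
    pose proof (EA_fin k b2 Hk Sh2) as F2.
    assert (IG2 : (invG (Gstep k x G) <= s + 1)%nat).
    { pose proof (Gstep_inv G k x Hk2 SG ltac:(lia)). lia. }
    replace (s + S t)%nat with ((s + 1) + t)%nat by lia.
    apply (IH b2 g2 (Gstep k x G) (s + 1)%nat H bg2 gb2 Sh2 Cl2 (Gstep_stair G k x SG) IG2 ltac:(lia)).
    intros b. apply (ismin_assoc G (Kk k x) (fun m => s_fun b2 m b) (fun l => s_fun beta l b) (Gstep k x G) (H b)).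
    + intros l. assert (beta = fun n => sw k x (b2 n)) as E by (apply functional_extensionality; auto).
      rewrite E. apply (kernel k x b2 g2 Hk2 F2 bg2 gb2 Asc).
    + intros m. apply Gstep_min; auto.
    + apply Hm.
Qed.

Lemma list_bounds (E : list Z) : exists m M, forall x, In x E -> m <= x <= M.
Proof.
  induction E as [|a E [m [M H]]].
  - exists 0, 0. intros x [].
  - exists (Z.min a m), (Z.max a M). intros x [<-|Hx]; [lia|]. specialize (H x Hx). lia.
Qed.

Section ASPlemmas.
Variables (f g : Z -> Z) (E : list Z).
Hypothesis fg : forall x, f (g x) = x.
Hypothesis gf : forall x, g (f x) = x.
Hypothesis HE : forall n, ~ same_sign n (f n) -> In n E.

Lemma asp_fin : fin_s f.
Proof.
  intros a b. destruct (list_bounds E) as [m [M HM]].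
  destruct (bound_range g 1 (Z.to_nat (a - 1))) as [Mg HMg].
  apply (finite_box _ b (Z.max (Z.max M 0) Mg + 1)). intros l [H1 H2]. split; auto.
  destruct (classic (same_sign l (f l))) as [S|S].
  - destruct S as [[S1 S2]|[S1 S2]]; [|lia].
    specialize (HMg (f l) ltac:(lia)). rewrite gf in HMg. lia.
  - specialize (HM l (HE l S)). lia.
Qed.

Definition Fs b := s_fun f 1 b.

Lemma Fs_step b : Fs b = (Fs (b+1) + if Z.ltb (f b) 1 then 1 else 0)%nat.
Proof. unfold Fs. apply s_step_pos. apply asp_fin. Qed.

Lemma Fs_stair : stair Fs.
Proof.
  destruct (list_bounds E) as [m [M HM]].
  split; [|split].
  - intros x. rewrite Fs_step. destruct (Z.ltb _ _); lia.
  - exists (Z.max M 0 + 1). intros x Hx. unfold Fs, s_fun. apply card_spec. apply is_card_empty.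
    intros l [H1 H2]. destruct (classic (same_sign l (f l))) as [S|S].
    + destruct S; lia.
    + specialize (HM l (HE l S)). lia.
  - exists (Z.min m 0 - 1). intros x Hx. rewrite Fs_step.
    destruct (Z.ltb_spec (f x) 1); [lia|]. exfalso.
    destruct (classic (same_sign x (f x))) as [S|S].
    + destruct S; lia.
    + specialize (HM x (HE x S)). lia.
Qed.

Lemma Fs_inv : invG Fs = sci f.
Proof.
  unfold invG, sci. apply card_ext. intros [a b]. unfold Pinv. simpl.
  rewrite (Fs_step a), (Fs_step b).
  destruct (Z.ltb_spec (f a) 1); destruct (Z.ltb_spec (f b) 1); lia.
Qed.

End ASPlemmas.

Lemma EA_bound k f : 1 <= k -> (forall n, f (n + k) = f n + k) -> exists M, forall l, l - f l <= M.
Proof.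
  intros Hk H.
  destruct (bound_range (fun r => r - f r) 0 (Z.to_nat k)) as [M HM].
  exists M. intros l.
  pose proof (EA_mult k f H (l mod k) (l / k)) as E.
  rewrite Z.add_comm, Z.mul_comm, <- Z.div_mod in E by lia.
  specialize (HM (l mod k)). simpl in HM.
  assert (0 <= l mod k < k) by (apply Z.mod_pos_bound; lia).
  specialize (HM ltac:(lia)).
  assert (l = k * (l / k) + l mod k) by (apply Z.div_mod; lia). set (q := k * (l / k)) in *. lia.
Qed.

Lemma inv_k_exists k beta : 1 <= k -> (forall n, beta (n + k) = beta n + k) -> exists c, is_num_inv_classes k beta c.
Proof.
  intros Hk Sh.
  destruct (EA_bound k beta Hk Sh) as [M HM].
  destruct (bound_range beta 0 (Z.to_nat k)) as [Mw HMw].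
  destruct (finite_box2 (fun p => inversion beta p /\ 0 <= fst p < k) 0 (Z.max k (Mw + M + 1) + 1)) as [c [l [N [El Len]]]].
  { intros [a b] [[H1 H2] H3]. simpl in *. specialize (HM b). specialize (HMw a ltac:(lia)). lia. }
  exists c, l. split; [auto|split; [auto|split; [|split]]].
  - intros p Hp. apply El; auto.
  - intros [p1 p2] [q1 q2] Hp Hq [E1 [j Hj]]. apply El in Hp. apply El in Hq. simpl in *.
    assert (j = 0) by nia. subst. f_equal; lia.
  - intros [p1 p2] Hp. set (j := p1 / k).
    exists (p1 - j * k, p2 - j * k). split.
    + apply El. unfold inversion in *. simpl in *.
      assert (B : forall n, beta (n - j * k) = beta n - j * k).
      { intros n. replace (n - j * k) with (n + (- j) * k) by lia. rewrite (EA_mult k beta Sh). lia. }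
      rewrite !B.
      assert (p1 = k * j + p1 mod k) by (apply Z.div_mod; lia).
      assert (0 <= p1 mod k < k) by (apply Z.mod_pos_bound; lia). lia.
    + unfold kequiv. simpl. split; [lia|]. exists j. lia.
Qed.


Theorem mainTheorem18 (k : Z) (alpha beta gamma : Z -> Z) :
  1 <= k -> ASP alpha -> EA k beta ->
  ASP gamma -> is_demazure alpha beta gamma ->
  Z.of_nat (sci alpha + inv_k k beta) < k ->
  (sci gamma <= sci alpha + inv_k k beta)%nat.
Proof.
  intros Hk [[ga [gaa aga]] [Ea HEa]] [[gb [gbb bgb]] Sh] [[gg [ggg ggg2]] [Eg HEg]] Dem Hlt.
  pose proof (choose_nat_spec _ (inv_k_exists k beta Hk Sh)) as Cl. fold (inv_k k beta) in Cl.
  rewrite <- (Fs_inv alpha ga Ea gaa HEa).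
  rewrite <- (Fs_inv gamma gg Eg ggg HEg).
  rewrite <- (Fs_inv alpha ga Ea gaa HEa) in Hlt.
  apply (main_ind k Hk (inv_k k beta) beta gb (Fs alpha) (invG (Fs alpha)) (Fs gamma) bgb gbb Sh Cl
           (Fs_stair alpha ga Ea gaa HEa) (le_n _) Hlt).
  intros b. destruct (Dem 1 b) as [[l Hl] A]. split.
  - exists l. unfold Fs. auto.
  - intros l'. unfold Fs. apply A.
Qed.
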